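(* Let $G$ be a group and let $x_1,x_2,x_3,g_1,g_2,g_3\in G$ be such that $$1=[x_1,x_2,x_3]=[x_1g_1,x_2g_2,x_3g_3]=[x_1g_1,x_2g_2,x_3]=[x_1g_1,x_2,x_3g_2]$$ $$=[x_1g_1,x_2,x_3]=[x_1g_1,x_2,x_3g_3]=[x_1,x_2,x_3g_1]=[x_1,x_2g_2,x_3g_1]$$ $$=[x_1,x_2g_2,x_3]=[x_1,x_2,x_3g_2]=[x_1,x_2g_2,x_3g_3]=[x_1,x_2,x_3g_3].$$ Then $[g_1,g_2,g_3]=1$.
   Context: Commutators: $[x,y]=x^{-1}y^{-1}xy$ and $[x,y,z]=[[x,y],z]$. *)

(* Defs.v *)
Set Implicit Arguments.

Definition is_group (T : Type) (mul : T -> T -> T) (one : T) (inv : T -> T) : Prop :=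
  (forall x y z, mul x (mul y z) = mul (mul x y) z) /\
  (forall x, mul one x = x) /\ (forall x, mul x one = x) /\
  (forall x, mul (inv x) x = one) /\ (forall x, mul x (inv x) = one).

Definition comm (T : Type) (mul : T -> T -> T) (inv : T -> T) (x y : T) : T :=
  mul (mul (mul (inv x) (inv y)) x) y.

Definition comm3 (T : Type) (mul : T -> T -> T) (inv : T -> T) (x y z : T) : T :=
  comm mul inv (comm mul inv x y) z.

(* Main.v *)
Require Import Defs.

Ltac gnorm0 a b c d e f g h i j := repeat (rewrite ?a, ?b, ?c, ?d, ?e, ?f, ?g, ?h, ?i, ?j).

Theorem lemma2p1 (T : Type) (mul : T -> T -> T) (one : T) (inv : T -> T)
  (HG : is_group mul one inv) (x1 x2 x3 g1 g2 g3 : T) :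
  let c := comm3 mul inv in
  c x1 x2 x3 = one ->
  c (mul x1 g1) (mul x2 g2) (mul x3 g3) = one ->
  c (mul x1 g1) (mul x2 g2) x3 = one ->
  c (mul x1 g1) x2 (mul x3 g2) = one ->
  c (mul x1 g1) x2 x3 = one ->
  c (mul x1 g1) x2 (mul x3 g3) = one ->
  c x1 x2 (mul x3 g1) = one ->
  c x1 (mul x2 g2) (mul x3 g1) = one ->
  c x1 (mul x2 g2) x3 = one ->
  c x1 x2 (mul x3 g2) = one ->
  c x1 (mul x2 g2) (mul x3 g3) = one ->
  c x1 x2 (mul x3 g3) = one ->
  c g1 g2 g3 = one.
Proof.
  destruct HG as (assoc & mul1 & mul1r & invl & invr).
  assert (mulA' : forall x y z, mul (mul x y) z = mul x (mul y z)) by (intros; now rewrite assoc).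
  assert (c1 : forall x y, mul (inv x) (mul x y) = y) by (intros; now rewrite assoc, invl, mul1).
  assert (c2 : forall x y, mul x (mul (inv x) y) = y) by (intros; now rewrite assoc, invr, mul1).
  assert (uniq : forall u v, mul u v = one -> inv u = v).
  { intros u v H. rewrite <- (mul1r (inv u)), <- H, assoc, invl, mul1. reflexivity. }
  assert (inv_mul : forall x y, inv (mul x y) = mul (inv y) (inv x)).
  { intros. apply uniq. rewrite mulA', c2. apply invr. }
  assert (inv_inv : forall x, inv (inv x) = x) by (intros; apply uniq; apply invl).
  assert (inv_one : inv one = one) by (apply uniq; apply mul1).
  assert (c3 : forall x, mul (inv x) x = one) by exact invl.
  assert (c4 : forall x, mul x (inv x) = one) by exact invr.
  assert (cm : forall k z, comm mul inv k z = one -> mul k z = mul z k).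
  { intros k z H. unfold comm in H.
    assert (H' : mul (mul z k) (mul (mul (mul (inv k) (inv z)) k) z) = mul z k) by (rewrite H; apply mul1r).
    rewrite <- H'. gnorm0 mulA' inv_mul inv_inv inv_one c1 c2 invl invr mul1 mul1r. reflexivity. }
  assert (cm2 : forall k z g, mul k z = mul z k -> mul k (mul z g) = mul (mul z g) k -> mul k g = mul g k).
  { intros k z g H1 H2. rewrite (assoc k z g), H1 in H2. rewrite !mulA' in H2.
    apply (f_equal (mul (inv z))) in H2. rewrite !c1 in H2. exact H2. }
  intros c h1 h2 h3 h4 h5 h6 h7 h8 h9 h10 h11 h12.
  unfold c, comm3 in *.
  set (A := comm mul inv x1 x2) in *.
  set (B := comm mul inv (mul x1 g1) (mul x2 g2)) in *.
  set (C := comm mul inv (mul x1 g1) x2) in *.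
  set (D := comm mul inv x1 (mul x2 g2)) in *.
  apply cm in h1, h2, h3, h4, h5, h6, h7, h8, h9, h10, h11, h12.
  assert (Ag1 := cm2 _ _ _ h1 h7).
  assert (Ag2 := cm2 _ _ _ h1 h10).
  assert (Ag3 := cm2 _ _ _ h1 h12).
  assert (Cg2 := cm2 _ _ _ h5 h4).
  assert (Cg3 := cm2 _ _ _ h5 h6).
  assert (Dg1 := cm2 _ _ _ h9 h8).
  assert (Dg3 := cm2 _ _ _ h9 h11).
  assert (Bg3 := cm2 _ _ _ h3 h2).
  assert (E1 : comm mul inv g1 g2 =
     mul (inv g1) (mul (inv g2) (mul A (mul g2 (mul (inv D) (mul g1 (mul B (mul (inv g2) (mul (inv C) g2))))))))).
  { unfold A, B, C, D, comm. gnorm0 mulA' inv_mul inv_inv inv_one c1 c2 invl invr mul1 mul1r. reflexivity. }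
  assert (Dg1' : mul (inv D) g1 = mul g1 (inv D)).
  { apply (f_equal (fun t => mul (inv D) (mul t (inv D)))) in Dg1. rewrite !mulA', c1, invr, mul1r in Dg1. symmetry. exact Dg1. }
  assert (Cg2' : mul (inv C) g2 = mul g2 (inv C)).
  { apply (f_equal (fun t => mul (inv C) (mul t (inv C)))) in Cg2. rewrite !mulA', c1, invr, mul1r in Cg2. symmetry. exact Cg2. }
  assert (E2 : comm mul inv g1 g2 = mul A (mul (inv D) (mul B (inv C)))).
  { rewrite E1. rewrite <- (mulA' A g2), Ag2, mulA', c1.
    rewrite Cg2', c1, <- (mulA' (inv D) g1), Dg1'. gnorm0 mulA' inv_mul inv_inv inv_one c1 c2 invl invr mul1 mul1r. rewrite <- (mulA' A g1), Ag1, mulA', c1. reflexivity. }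
  rewrite E2. unfold comm at 1.
  assert (Dg3' : mul (inv D) g3 = mul g3 (inv D)).
  { apply (f_equal (fun t => mul (inv D) (mul t (inv D)))) in Dg3. rewrite !mulA', c1, invr, mul1r in Dg3. symmetry. exact Dg3. }
  assert (Cg3' : mul (inv C) g3 = mul g3 (inv C)).
  { apply (f_equal (fun t => mul (inv C) (mul t (inv C)))) in Cg3. rewrite !mulA', c1, invr, mul1r in Cg3. symmetry. exact Cg3. }
  rewrite !mulA', Cg3', <- (mulA' B g3), Bg3, mulA', <- (mulA' (inv D) g3), Dg3', mulA',
    <- (mulA' A g3), Ag3. gnorm0 mulA' inv_mul inv_inv inv_one c1 c2 invl invr mul1 mul1r. reflexivity.
Qed.
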